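(* Let $M$ be a $\Lambda_{\mathrm{NF}}$-inhabitant of the formula $\phi$. If $M$ is not locally compact, then there exist two addresses $b<b'$ in $\mathrm{dom}(M)$ such that $M|_b$ and $M|_{b'}$ are of the same kind and $\mathrm{Free}(M|_b)=\mathrm{Free}(M|_{b'})$. Moreover, $M$ is then not a $\Lambda_{\mathrm{NF}}$-inhabitant of $\phi$ of minimal size (size meaning $|\mathrm{dom}(M)|$).
   Context: Formulas are built from atoms with $\to$; $\mathrm{Sub}(\phi)$ is the set of subformulas of $\phi$. Let $\mathcal X$ be a countably infinite set of variables with an injective map $\mathcal O:\mathcal X\to\mathbb N$; $x<y$ iff $\mathcal O(x)<\mathcal O(y)$. Terms are pure $\lambda$-terms over $\mathcal X$, not identified up to $\alpha$-conversion; no two $\lambda$'s bind the same variable and no variable is both free and bound. $\mathrm{Free}(M)$ is the strictly increasing sequence of free variables of $M$. HRM terms: variables; $\lambda x.M$ with $M$ HRM and $x$ the greatest free variable of $M$; $(MN)$ with $M,N$ HRM and every free variable of $M$ $\le$ some free variable of $N$. Fix $\Omega$ from variables to formulas with each $\Omega^{-1}(\phi)$ infinite. Typing: $x:\Omega(x)$; $\lambda x.M:\chi\to\psi$ if $x:\chi$, $M:\psi$, $\lambda x.M$ HRM; $(MN):\psi$ if $M:\chi\to\psi$, $N:\chi$, $(MN)$ HRM. $\Lambda_{\mathrm{NF}}$ is the set of typed $\beta$-normal terms; a $\Lambda_{\mathrm{NF}}$-inhabitant of $\phi$ is a closed term of $\Lambda_{\mathrm{NF}}$ of type $\phi$. Two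 terms of $\Lambda_{\mathrm{NF}}$ are of the same kind if both are variables, or both applications, or both abstractions, and they have the same type. Addresses are finite sequences of positive integers with prefix order $\le$ ($<$ strict), concatenation $\cdot$, empty address $\varepsilon$. Terms are identified with trees: $x$ is $\varepsilon\mapsto x$; $\lambda x.M$ maps $\varepsilon$ to $\lambda x$ with subtree $M$ at $(1)$; $(M_1M_2)$ maps $\varepsilon$ to $@$ with subtrees at $(1),(2)$; $M|_a$ is the subterm at $a$. For a partial tree $\pi$, $\pi|_a$ is $c\mapsto\pi(a\cdot c)$. Let $\mathfrak S$ consist of all formulas (arity 0) and symbols $@_\phi$ (arity 2). A blueprint is a finite partial tree with values in $\mathfrak S$ such that if $\alpha(a)=@_\phi$ then $\alpha|_{a\cdot(1)},\alpha|_{a\cdot(2)}$ have non-empty domains. The relative depth of an address $a$ in a blueprint $\alpha$ is the number of $b\in\mathrm{dom}(\alpha)$ with $b<a$; the relative depth of $\alpha$ is $0$ if $\alpha$ is empty and otherwise the maximal relative depth of an address of $\mathrm{dom}(\alpha)$. The stable part of $M\in\Lambda_{\mathrm{NF}}$ is the set of $a\in\mathrm{dom}(M)$ with $\mathrm{Free}(M|_a)\subseteq\mathrm{Free}(M)$ and $M|_a$ a variable or an application; the blueprint of $M$ maps each $a$ in the stable part to $\psi$ if $M|_a$ is a variable of type $\psi$ and to $@_\psi$ if $M|_a$ is an application of type $\psi$. For $a\in\mathrm{dom}(M)$, $\Lambda(M,a)$ is the sequence $(x_1,\dots,x_k)$ of variables such that $(\lambda x_1,\dots,\lambda x_k)$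 are, in order, the labels of the form $\lambda x$ of $M$ at the prefixes of $a$ (including $a$). A $\Lambda_{\mathrm{NF}}$-inhabitant $M$ of $\phi$ is locally compact if for every $a\in\mathrm{dom}(M)$ the blueprint of $M|_a$ has relative depth at most $|\Lambda(M,a)|\times|\mathrm{Sub}(\phi)|$. *)

(* Defs.v *)
From HB Require Import structures.
From mathcomp Require Import all_boot.

Set Implicit Arguments.
Unset Strict Implicit.
Unset Printing Implicit Defensive.

Inductive form : Type :=
| Atom : nat -> form
| Imp : form -> form -> form.

Fixpoint form_eqb (f g : form) : bool :=
  match f, g with
  | Atom m, Atom n => m == n
  | Imp f1 f2, Imp g1 g2 => form_eqb f1 g1 && form_eqb f2 g2
  | _, _ => false
  end.

Lemma form_eqbP : Equality.axiom form_eqb.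
Proof.
elim=> [m|f1 IH1 f2 IH2] [n|g1 g2] /=; try by constructor.
- by apply: (iffP eqP) => [->|[->]].
- by case: (IH1 g1) => [->|H]; case: (IH2 g2) => [->|H'] /=; constructor;
    try congruence.
Qed.

HB.instance Definition _ := hasDecEq.Build form form_eqbP.

Fixpoint subformulas (f : form) : seq form :=
  match f with
  | Atom _ => [:: f]
  | Imp a b => f :: subformulas a ++ subformulas b
  end.

Definition card_Sub (f : form) : nat := size (undup (subformulas f)).

(* Variables are natural numbers (a countably infinite set); the order
   on variables is given by an injective map O : nat -> nat,
   x < y iff O x < O y. Terms are raw lambda-terms (no alpha-conversion). *)
Inductive term : Type :=
| Var : nat -> term
| Lam : nat -> term -> term
| App : term -> term -> term.

Fixpoint fv (M : term) : seq nat :=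
  match M with
  | Var x => [:: x]
  | Lam x N => filter (fun y => y != x) (fv N)
  | App N P => fv N ++ fv P
  end.

Fixpoint bv (M : term) : seq nat :=
  match M with
  | Var _ => [::]
  | Lam x N => x :: bv N
  | App N P => bv N ++ bv P
  end.

Definition wf_term (M : term) : bool :=
  uniq (bv M) && all (fun x => x \notin bv M) (fv M).

Definition Free (O : nat -> nat) (M : term) : seq nat :=
  sort (fun x y => O x <= O y) (undup (fv M)).

Fixpoint hrm (O : nat -> nat) (M : term) : bool :=
  match M with
  | Var _ => true
  | Lam x N => hrm O N && (Free O N != [::]) && (last x (Free O N) == x)
  | App N P => [&& hrm O N, hrm O P &
                 all (fun x => has (fun y => O x <= O y) (Free O P))
                     (Free O N)]
  end.

(* type computation (the HRM conditions are checked separately by hrm) *)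
Fixpoint tyof (Om : nat -> form) (M : term) : option form :=
  match M with
  | Var x => Some (Om x)
  | Lam x N => match tyof Om N with
               | Some psi => Some (Imp (Om x) psi)
               | None => None
               end
  | App N P => match tyof Om N, tyof Om P with
               | Some (Imp chi psi), Some chi' =>
                   if chi == chi' then Some psi else None
               | _, _ => None
               end
  end.

Definition has_type (O : nat -> nat) (Om : nat -> form) (M : term)
  (phi : form) : Prop :=
  hrm O M /\ tyof Om M = Some phi.

Fixpoint beta_normal (M : term) : bool :=
  match M with
  | Var _ => true
  | Lam _ N => beta_normal N
  | App (Lam _ _) _ => false
  | App N P => beta_normal N && beta_normal P
  end.

Definition in_LNF (O : nat -> nat) (Om : nat -> form) (M : term) : Prop :=
  wf_term M /\ beta_normal M /\ exists phi, has_type O Om M phi.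

Definition LNF_inhabitant (O : nat -> nat) (Om : nat -> form) (M : term)
  (phi : form) : Prop :=
  wf_term M /\ beta_normal M /\ has_type O Om M phi /\ Free O M = [::].

Definition address := seq nat.

Fixpoint addrs (M : term) : seq address :=
  match M with
  | Var _ => [:: [::]]
  | Lam _ N => [::] :: map (cons 1) (addrs N)
  | App N P => [::] :: map (cons 1) (addrs N) ++ map (cons 2) (addrs P)
  end.

Definition dom (M : term) : pred address := fun a => a \in addrs M.

Definition term_size (M : term) : nat := size (addrs M).

Fixpoint subt (M : term) (a : address) : option term :=
  match a, M with
  | [::], _ => Some M
  | 1 :: a', Lam _ N => subt N a'
  | 1 :: a', App N _ => subt N a'
  | 2 :: a', App _ P => subt P a'
  | _, _ => None
  end.

Definition addr_lt (b a : address) : bool := prefix b a && (b != a).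

Fixpoint lams (M : term) (a : address) : seq nat :=
  match M, a with
  | Lam x _, [::] => [:: x]
  | Lam x N, 1 :: a' => x :: lams N a'
  | App N _, 1 :: a' => lams N a'
  | App _ P, 2 :: a' => lams P a'
  | _, _ => [::]
  end.

(* Blueprint symbols: formulas (arity 0) and @_phi (arity 2) *)
Inductive bsym : Type :=
| BForm : form -> bsym
| BApp : form -> bsym.

Definition is_var_or_app (M : term) : bool :=
  match M with Lam _ _ => false | _ => true end.

Definition stable (O : nat -> nat) (M : term) (a : address) : bool :=
  match subt M a with
  | Some N => (a \in addrs M) && is_var_or_app N &&
              all (fun x => x \in Free O M) (Free O N)
  | None => false
  end.

(* The blueprint of M, as a finite partial tree: the list of pairs
   (address, label) for the addresses of its domain (the stable part). *)
Definition blueprint (O : nat -> nat) (Om : nat -> form) (M : term)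
  : seq (address * bsym) :=
  pmap (fun a =>
          match subt M a with
          | Some (Var x) => Some (a, BForm (Om x))
          | Some (App N P as Q) =>
              match tyof Om Q with
              | Some psi => Some (a, BApp psi)
              | None => None
              end
          | _ => None
          end)
       [seq a <- addrs M | stable O M a].

Definition rel_depth_addr (alpha : seq (address * bsym)) (a : address) : nat :=
  count (fun b => addr_lt b a) (undup (map fst alpha)).

Definition rel_depth (alpha : seq (address * bsym)) : nat :=
  \max_(a <- map fst alpha) rel_depth_addr alpha a.

Definition locally_compact (O : nat -> nat) (Om : nat -> form) (M : term)
  (phi : form) : Prop :=
  LNF_inhabitant O Om M phi /\
  forall a N, a \in addrs M -> subt M a = Some N ->
    rel_depth (blueprint O Om N) <= size (lams M a) * card_Sub phi.

Definition kind_tag (M : term) : nat :=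
  match M with Var _ => 0 | Lam _ _ => 1 | App _ _ => 2 end.

Definition same_kind (Om : nat -> form) (M N : term) : Prop :=
  kind_tag M = kind_tag N /\
  exists psi, tyof Om M = Some psi /\ tyof Om N = Some psi.

Definition minimal_inhabitant (O : nat -> nat) (Om : nat -> form) (M : term)
  (phi : form) : Prop :=
  LNF_inhabitant O Om M phi /\
  forall N, LNF_inhabitant O Om N phi -> term_size M <= term_size N.

(* Main.v *)
Require Import Defs.
From mathcomp Require Import all_boot.
From Stdlib Require Import Classical.
Set Implicit Arguments. Unset Strict Implicit.

Lemma subt_addrs M a N : subt M a = Some N -> a \in addrs M.
Proof.
elim: M a N => [x|x P IH|P IHP Q IHQ] [|[|[|[|k]]] a] N //=.
- move=> /IH H; by rewrite in_cons (map_f _ H) orbT.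
- move=> /IHP H; by rewrite in_cons mem_cat (map_f _ H) orbT.
- move=> /IHQ H; by rewrite in_cons mem_cat (map_f _ H) !orbT.
Qed.

Lemma addrs_subt M a : a \in addrs M -> exists N, subt M a = Some N.
Proof.
elim: M a => [x|x P IH|P IHP Q IHQ] a /=.
- by rewrite inE => /eqP ->; eauto.
- rewrite inE => /orP[/eqP->|/mapP[c Hc ->]] /=; eauto.
- rewrite inE mem_cat => /orP[/eqP->|/orP[/mapP[c Hc ->]|/mapP[c Hc ->]]] /=; eauto.
Qed.

Lemma subt_cat M a N d : subt M a = Some N -> subt M (a ++ d) = subt N d.
Proof.
elim: M a N => [x|x P IH|P IHP Q IHQ] [|[|[|[|k]]] a] N //=; try by move=> [<-].
all: auto.
Qed.

Lemma subt_fv_lams M a N x : subt M a = Some N -> x \in fv N ->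
  (x \in fv M) || (x \in lams M a).
Proof.
elim: M a N => [y|y P IH|P IHP Q IHQ] [|[|[|[|k]]] a] N //=; try by move=> [<-] ->.
- move=> /IH H /H; rewrite mem_filter inE.
  by case: (x =P y) => //= _.
- by move=> /IHP H /H; rewrite mem_cat; case/orP=> ->; rewrite ?orbT.
- by move=> /IHQ H /H; rewrite mem_cat; case/orP=> ->; rewrite ?orbT.
Qed.

Lemma lams_bv M a x : x \in lams M a -> x \in bv M.
Proof.
elim: M a => [y|y P IH|P IHP Q IHQ] [|[|[|[|k]]] a] //=; rewrite ?inE ?mem_cat.
- by move=> ->.
- by case/orP=> [->|/IH ->]; rewrite ?orbT.
- by move/IHP ->.
- by move/IHQ ->; rewrite orbT.
Qed.

Lemma subt_bv M a N : subt M a = Some N -> {subset bv N <= bv M}.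
Proof.
elim: M a N => [y|y P IH|P IHP Q IHQ] [|[|[|[|k]]] a] N //=; try by move=> [<-].
- by move=> /IH H x /H; rewrite inE => ->; rewrite orbT.
- by move=> /IHP H x /H; rewrite mem_cat => ->.
- by move=> /IHQ H x /H; rewrite mem_cat => ->; rewrite orbT.
Qed.

Lemma bv_fv_sub M a N x : uniq (bv M) -> subt M a = Some N ->
  x \in bv N -> x \in fv N -> x \in fv M.
Proof.
elim: M a N => [y|y P IH|P IHP Q IHQ] [|[|[|[|k]]] a] N //=; try by move=> _ [<-].
- case/andP=> ny U E bN fN; rewrite mem_filter (IH _ _ U E bN fN) andbT.
  apply/eqP=> exy; subst; by rewrite (subt_bv E bN) in ny.
- rewrite cat_uniq => /and3P[U _ _] E bN fN; by rewrite mem_cat (IHP _ _ U E bN fN).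
- rewrite cat_uniq => /and3P[_ _ U] E bN fN; by rewrite mem_cat (IHQ _ _ U E bN fN) orbT.
Qed.

Lemma beta_App N P : beta_normal (App N P) = is_var_or_app N && beta_normal N && beta_normal P.
Proof. by case: N. Qed.

Lemma subt_beta M a N : beta_normal M -> subt M a = Some N -> beta_normal N.
Proof.
elim: M a N => [y|y P IH|P IHP Q IHQ] [|[|[|[|k]]] a] N; rewrite ?beta_App //=; try by move=> H [<-]; rewrite ?beta_App.
- exact: IH.
- move=> /andP[/andP[_ H] _]; exact: IHP.
- move=> /andP[_ H]; exact: IHQ.
Qed.

Lemma subt_hrm O M a N : hrm O M -> subt M a = Some N -> hrm O N.
Proof.
elim: M a N => [y|y P IH|P IHP Q IHQ] [|[|[|[|k]]] a] N //=; try by move=> H [<-].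
- by case/andP=> /andP[H _] _; exact: IH.
- by case/and3P=> H _ _; exact: IHP.
- by case/and3P=> _ H _; exact: IHQ.
Qed.

Lemma subt_ty Om M a N t : tyof Om M = Some t -> subt M a = Some N ->
  exists u, tyof Om N = Some u.
Proof.
elim: M a N t => [y|y P IH|P IHP Q IHQ] [|[|[|[|k]]] a] N t //=; try by move=> H [<-]; eauto.
- by case E: (tyof Om P) => [u|] // _; apply: IH E.
- case E: (tyof Om P) => [[|c u]|] //; case: (tyof Om Q) => // v _; exact: IHP E.
- case: (tyof Om P) => [[|c u]|] //; case E: (tyof Om Q) => [v|] // _; exact: IHQ E.
Qed.

Lemma ts_Lam x N : term_size (Lam x N) = (term_size N).+1.
Proof. by rewrite /term_size /= size_map. Qed.
Lemma ts_App N P : term_size (App N P) = (term_size N + term_size P).+1.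
Proof. by rewrite /term_size /= size_cat !size_map. Qed.

Lemma subt_nil M : subt M [::] = Some M. Proof. by case: M. Qed.

Lemma subt_size M a N : a != [::] -> subt M a = Some N -> term_size N < term_size M.
Proof.
elim: M a N => [y|y P IH|P IHP Q IHQ] [|[|[|[|k]]] a] N //= _.
- rewrite ts_Lam ltnS; case: a => [|c a] /=; first by rewrite subt_nil; case=> ->.
  move=> E; apply: ltnW; exact: IH E.
- rewrite ts_App ltnS; case: a => [|c a] /=; first by rewrite subt_nil; case=> <-; exact: leq_addr.
  move=> E; apply: leq_trans (leq_addr _ _); apply: ltnW; exact: IHP E.
- rewrite ts_App ltnS; case: a => [|c a] /=; first by rewrite subt_nil; case=> <-; exact: leq_addl.
  move=> E; apply: leq_trans (leq_addl _ _); apply: ltnW; exact: IHQ E.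
Qed.

Fixpoint repl (M : term) (a : address) (Q : term) : term :=
  match a, M with
  | [::], _ => Q
  | 1 :: a', Lam x N => Lam x (repl N a' Q)
  | 1 :: a', App N P => App (repl N a' Q) P
  | 2 :: a', App N P => App N (repl P a' Q)
  | _, _ => M
  end.

Lemma repl_nil M Q : repl M [::] Q = Q. Proof. by case: M. Qed.

Ltac rs := elim=> [y|y P1 IH|P1 IHP Q1 IHQ] [|[|[|[|k]]] a] PP //=;
  rewrite ?subt_nil ?repl_nil.

Lemma repl_size M a P Q : subt M a = Some P -> term_size Q < term_size P ->
  term_size (repl M a Q) < term_size M.
Proof.
elim: M a P=> [y|y P1 IH|P1 IHP Q1 IHQ] [|[|[|[|k]]] a] PP //=;
  rewrite ?subt_nil ?repl_nil; try by case=> <-.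
- by rewrite !ts_Lam ltnS => /IH H /H.
- by rewrite !ts_App ltnS ltn_add2r => /IHP H /H.
- by rewrite !ts_App ltnS ltn_add2l => /IHQ H /H.
Qed.

Lemma repl_ty Om M a P Q : subt M a = Some P -> tyof Om Q = tyof Om P ->
  tyof Om (repl M a Q) = tyof Om M.
Proof.
elim: M a P=> [y|y P1 IH|P1 IHP Q1 IHQ] [|[|[|[|k]]] a] PP //=;
  rewrite ?subt_nil ?repl_nil; try by case=> <-.
- by move=> /IH H /H ->.
- by move=> /IHP H /H ->.
- by move=> /IHQ H /H ->.
Qed.

Lemma repl_kind M a P Q : subt M a = Some P -> kind_tag Q = kind_tag P ->
  kind_tag (repl M a Q) = kind_tag M.
Proof. elim: M a P=> [y|y P1 IH|P1 IHP Q1 IHQ] [|[|[|[|k]]] a] PP //=;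
  rewrite ?subt_nil ?repl_nil; by case=> <-. Qed.

Lemma repl_beta M a P Q : subt M a = Some P -> kind_tag Q = kind_tag P ->
  beta_normal Q -> beta_normal M -> beta_normal (repl M a Q).
Proof.
elim: M a P=> [y|y P1 IH|P1 IHP Q1 IHQ] [|[|[|[|k]]] a] PP;
  rewrite ?subt_nil ?repl_nil; try by case=> <-.
all: try done.
- by move=> /= /IH H /H H' /H'.
- move=> E K BQ; rewrite /= in E; rewrite [repl _ _ _]/= !beta_App => /andP[/andP[V B1] B2].
  have KK := repl_kind E K.
  rewrite (IHP _ _ E K BQ B1) B2 andbT.
  by move: V KK; case: (repl _ _ _); case: P1 {IHP E B1}.
- move=> E K BQ; rewrite /= in E; rewrite [repl _ _ _]/= !beta_App => /andP[/andP[V B1] B2].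
  by rewrite (IHQ _ _ E K BQ B2) V B1.
Qed.

Lemma repl_fv M a P Q : subt M a = Some P -> fv Q =i fv P ->
  fv (repl M a Q) =i fv M.
Proof.
elim: M a P=> [y|y P1 IH|P1 IHP Q1 IHQ] [|[|[|[|k]]] a] PP //=;
  rewrite ?subt_nil ?repl_nil; try by case=> <-.
- by move=> /IH H /H H' x; rewrite !mem_filter H'.
- by move=> /IHP H /H H' x; rewrite !mem_cat H'.
- by move=> /IHQ H /H H' x; rewrite !mem_cat H'.
Qed.

Lemma Free_eq O (HO : injective O) A B : fv A =i fv B -> Free O A = Free O B.
Proof.
move=> E; rewrite /Free; apply/perm_sortP.
- by move=> x y; exact: leq_total.
- by move=> y x z; exact: leq_trans.
- by move=> x y /anti_leq /HO.
- apply: uniq_perm; rewrite ?undup_uniq // => x; by rewrite !mem_undup E.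
Qed.

Lemma repl_hrm O (HO : injective O) M a P Q : subt M a = Some P -> fv Q =i fv P ->
  hrm O Q -> hrm O M -> hrm O (repl M a Q).
Proof.
elim: M a P=> [y|y P1 IH|P1 IHP Q1 IHQ] [|[|[|[|k]]] a] PP //=;
  rewrite ?subt_nil ?repl_nil; try by case=> <-.
- move=> E F HQ /andP[/andP[H1 H2] H3].
  by rewrite (IH _ _ E F HQ H1) (Free_eq HO (repl_fv E F)) H2 H3.
- move=> E F HQ /and3P[H1 H2 H3].
  by rewrite (IHP _ _ E F HQ H1) (Free_eq HO (repl_fv E F)) H2 H3.
- move=> E F HQ /and3P[H1 H2 H3].
  by rewrite (IHQ _ _ E F HQ H2) (Free_eq HO (repl_fv E F)) H1 H3.
Qed.

Lemma repl_bv M a P : subt M a = Some P -> exists pre post,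
  bv M = pre ++ bv P ++ post /\ forall Q, bv (repl M a Q) = pre ++ bv Q ++ post.
Proof.
elim: M a P=> [y|y P1 IH|P1 IHP Q1 IHQ] [|[|[|[|k]]] a] PP //=;
  rewrite ?subt_nil ?repl_nil.
all: try by case=> <-; exists [::], [::]; rewrite cats0; split => // Q; rewrite cats0.
- move=> /IH [pre [post [E1 E2]]]; exists (y :: pre), post; split; first by rewrite E1.
  by move=> Q; rewrite /= E2.
- move=> /IHP [pre [post [E1 E2]]]; exists pre, (post ++ bv Q1); split.
    by rewrite E1 -!catA.
  by move=> Q; rewrite /= E2 -!catA.
- move=> /IHQ [pre [post [E1 E2]]]; exists (bv P1 ++ pre), post; split.
    by rewrite E1 -!catA.
  by move=> Q; rewrite /= E2 -!catA.
Qed.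

Lemma sub_refl f : f \in subformulas f. Proof. by case: f => *; rewrite inE eqxx. Qed.

Lemma sub_trans f g : g \in subformulas f -> {subset subformulas g <= subformulas f}.
Proof.
elim: f => [n|a IHa b IHb] /=.
- by rewrite inE => /eqP->.
- rewrite inE mem_cat => /orP[/eqP->//|/orP[/IHa H|/IHb H]] x /H Hx;
  by rewrite inE mem_cat Hx ?orbT.
Qed.

Lemma sub_l a b : a \in subformulas (Imp a b).
Proof. by rewrite /= inE mem_cat sub_refl orbT. Qed.
Lemma sub_r a b : b \in subformulas (Imp a b).
Proof. by rewrite /= inE mem_cat sub_refl !orbT. Qed.

Lemma tyof_App Om P Q t : tyof Om (App P Q) = Some t ->
  exists chi, tyof Om P = Some (Imp chi t) /\ tyof Om Q = Some chi.
Proof.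
rewrite /=; case: (tyof Om P) => [[|chi t']|] //; case: (tyof Om Q) => // c.
by case: eqP => // -> [<-]; eauto.
Qed.

Lemma tyof_Lam Om x P t : tyof Om (Lam x P) = Some t ->
  exists u, tyof Om P = Some u /\ t = Imp (Om x) u.
Proof. by rewrite /=; case: (tyof Om P) => // u [<-]; eauto. Qed.

Lemma neutral_ty Om N t : beta_normal N -> is_var_or_app N -> tyof Om N = Some t ->
  exists y, y \in fv N /\ t \in subformulas (Om y).
Proof.
elim: N t => [x|x P IH|P IHP Q IHQ] t //.
- by move=> _ _ [<-]; exists x; rewrite inE eqxx sub_refl.
- rewrite beta_App => /andP[/andP[V B1] _] _ /tyof_App [chi [E1 _]].
  have [y [Hy Hs]] := IHP _ B1 V E1; exists y; split; first by rewrite /= mem_cat Hy.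
  exact: (sub_trans Hs (sub_r _ _)).
Qed.

Lemma subf Om N t d Q : beta_normal N -> tyof Om N = Some t -> subt N d = Some Q ->
  exists u, tyof Om Q = Some u /\
    (u \in subformulas t \/ exists y, y \in fv N /\ u \in subformulas (Om y)).
Proof.
elim: N t d Q => [x|x P IH|P IHP Q1 IHQ] t [|[|[|[|k]]] d] Q //;
  rewrite ?subt_nil; try by move=> _ E [<-]; exists t; rewrite sub_refl; auto.
- move=> /= B /tyof_Lam [u [Eu ->]] E.
  have [v [Ev H]] := IH _ _ _ B Eu E; exists v; split => //.
  case: H => [H|[y [Hy Hs]]]; first by left; exact: (sub_trans (sub_r _ _) H).
  case: (y =P x) => [exy|nxy].
    by left; subst; exact: (sub_trans (sub_l _ _) Hs).
  by right; exists y; rewrite /= mem_filter Hy andbT; split => //; apply/eqP.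
- rewrite beta_App => /andP[/andP[V B1] B2] /tyof_App [chi [E1 E2]] /= E.
  have [y [Hy Hs]] := neutral_ty B1 V E1.
  have [v [Ev H]] := IHP _ _ _ B1 E1 E; exists v; split => //.
  right; case: H => [H|[z [Hz Hs2]]].
    by exists y; rewrite mem_cat Hy; split => //; exact: (sub_trans Hs H).
  by exists z; rewrite mem_cat Hz.
- rewrite beta_App => /andP[/andP[V B1] B2] /tyof_App [chi [E1 E2]] /= E.
  have [y [Hy Hs]] := neutral_ty B1 V E1.
  have [v [Ev H]] := IHQ _ _ _ B2 E2 E; exists v; split => //.
  right; case: H => [H|[z [Hz Hs2]]].
    exists y; rewrite mem_cat Hy; split => //.
    exact: (sub_trans Hs (sub_trans (sub_l _ _) H)).
  by exists z; rewrite mem_cat Hz orbT.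
Qed.

Lemma Free_mem O M x : (x \in Free O M) = (x \in fv M).
Proof. by rewrite /Free mem_sort mem_undup. Qed.

Lemma Free_uniq O M : uniq (Free O M).
Proof. by rewrite /Free sort_uniq undup_uniq. Qed.

Lemma pmap_fst (g : address -> option (address * bsym)) l x :
  (forall a p, g a = Some p -> p.1 = a) -> x \in map fst (pmap g l) -> x \in l.
Proof.
move=> Hg; elim: l => //= y l IH; case E: (g y) => [p|] /=; last by move/IH => H; rewrite inE H orbT.
rewrite inE => /orP[/eqP->|/IH H]; rewrite inE ?H ?orbT //; by rewrite (Hg _ _ E) eqxx.
Qed.

Lemma blueprint_mem O Om N x : x \in map fst (blueprint O Om N) ->
  (x \in addrs N) && stable O N x.
Proof.
rewrite /blueprint => /pmap_fst H; rewrite andbC -mem_filter; apply: H.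
move=> a p; case: (subt N a) => // [[y|y P|P Q]] //; first by case=> <-.
by case: (tyof Om (App P Q)) => // psi [<-].
Qed.

Lemma neutral_fv N : beta_normal N -> is_var_or_app N -> exists y, y \in fv N.
Proof.
elim: N => [x|x P IH|P IHP Q IHQ] //.
- by exists x; rewrite inE.
- rewrite beta_App => /andP[/andP[V B1] _] _.
  by have [y Hy] := IHP B1 V; exists y; rewrite /= mem_cat Hy.
Qed.

Lemma prefix_cmp (e1 e2 c : address) : prefix e1 c -> prefix e2 c ->
  prefix e1 e2 || prefix e2 e1.
Proof.
rewrite !prefixE => /eqP H1 /eqP H2.
case: (leqP (size e1) (size e2)) => [le|/ltnW le].
- by rewrite -H2 take_takel // H1 eqxx.
- by rewrite -H1 take_takel // H2 eqxx orbT.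
Qed.

Theorem lemma3p5
  (O : nat -> nat) (HO : injective O)
  (Om : nat -> form) (HOm : forall (psi : form) (n : nat),
                              exists x, n < x /\ Om x = psi)
  (phi : form) (M : term) :
  LNF_inhabitant O Om M phi ->
  ~ locally_compact O Om M phi ->
  (exists (b b' : address) (Nb Nb' : term),
      addr_lt b b' /\ b \in addrs M /\ b' \in addrs M /\
      subt M b = Some Nb /\ subt M b' = Some Nb' /\
      same_kind Om Nb Nb' /\ Free O Nb = Free O Nb')
  /\ ~ minimal_inhabitant O Om M phi.
Proof.
move=> LI NLC; have [WF [BN [[HR TY] CL]]] := LI.
have fvM : forall x, x \notin fv M by move=> x; rewrite -(Free_mem O) CL.
have UB : uniq (bv M) by case/andP: WF.
have P1 : exists (b b' : address) (Nb Nb' : term),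
      addr_lt b b' /\ b \in addrs M /\ b' \in addrs M /\
      subt M b = Some Nb /\ subt M b' = Some Nb' /\
      same_kind Om Nb Nb' /\ Free O Nb = Free O Nb'.
  have [a [N [Ha [EN Hd]]]] : exists a N, a \in addrs M /\ subt M a = Some N /\
      size (lams M a) * card_Sub phi < rel_depth (blueprint O Om N).
    apply: NNPP => H; apply: NLC; split => // a N Ha EN; rewrite leqNgt; apply/negP => Hlt.
    by apply: H; exists a, N.
  set alpha := blueprint O Om N in Hd.
  set K := size (lams M a) in Hd; set s := card_Sub phi in Hd.
  have [c [Hc Hcd]] : exists c, c \in map fst alpha /\ K * s < rel_depth_addr alpha c.
    apply: NNPP => H; move: Hd; rewrite ltnNge => /negP; apply.
    apply/bigmax_leqP_seq => i Hi _; rewrite leqNgt; apply/negP => Hlt.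
    by apply: H; exists i.
  set T := [seq e <- undup (map fst alpha) | addr_lt e c].
  have szT : size T = rel_depth_addr alpha c by rewrite size_filter.
  have UT : uniq T by rewrite filter_uniq // undup_uniq.
  have cN : c \in addrs N by case/andP: (blueprint_mem Hc).
  have memT : forall e, e \in T -> exists Q, [/\ subt N e = Some Q,
        (exists P1 P2, Q = App P1 P2), addr_lt e c &
        {subset Free O Q <= Free O N}].
    move=> e; rewrite mem_filter mem_undup => /andP[lt /blueprint_mem /andP[eN]].
    rewrite /stable; case E: (subt N e) => [Q|] //= /andP[/andP[_ VA] AL].
    exists Q; split => //; last by move=> x Hx; exact: (allP AL).
    case: Q E VA {AL} => // [y|P1 P2] E _; last by eauto.
    case/andP: lt => /prefixP [d Ed] ne.
    have [Qc Ec] := addrs_subt cN.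
    move: Ec; rewrite Ed (subt_cat _ E); case: d Ed => [|k d] Ed.
      by rewrite Ed cats0 eqxx in ne.
    by case: k {Ed} => [|[|[|k]]].
  set sub := fun e => odflt (Var 0) (subt N e).
  set f := fun e => (size (Free O (sub e)), tyof Om (sub e)).
  set cod := [seq (i, Some t) | i <- iota 1 K, t <- undup (subformulas phi)].
  have szcod : size cod = K * s by rewrite size_allpairs size_iota.
  have subcod : {subset map f T <= cod}.
    move=> z /mapP [e eT ->]; have [Q [EQ [P1 [P2 EA]] _ SF]] := memT e eT.
    rewrite /f /sub EQ /=.
    have EMQ : subt M (a ++ e) = Some Q by rewrite (subt_cat _ EN).
    have [u [Eu Hu]] := subf BN TY EMQ.
    have Hu' : u \in subformulas phi.
      by case: Hu => // [[y [Hy _]]]; rewrite (negbTE (fvM y)) in Hy.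
    rewrite Eu; apply/allpairsP; exists (size (Free O Q), u); split => //=;
      last by rewrite mem_undup.
    rewrite mem_iota add1n ltnS; apply/andP; split.
      have BQ := subt_beta BN EMQ.
      have VQ : is_var_or_app Q by rewrite EA.
      have [y Hy] := neutral_fv BQ VQ.
      by rewrite -(Free_mem O) in Hy; case: (Free O Q) Hy.
    apply: uniq_leq_size; first exact: Free_uniq.
    move=> x /SF; rewrite Free_mem => /(subt_fv_lams EN).
    by rewrite (negbTE (fvM x)).
  have NU : ~~ uniq (map f T).
    apply/negP => U; move: (uniq_leq_size U subcod); rewrite size_map szcod szT.
    by rewrite leqNgt Hcd.
  have key : forall e1 e2, e1 \in T -> e2 \in T -> addr_lt e1 e2 -> f e1 = f e2 ->
      exists (b b' : address) (Nb Nb' : term),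
      addr_lt b b' /\ b \in addrs M /\ b' \in addrs M /\
      subt M b = Some Nb /\ subt M b' = Some Nb' /\
      same_kind Om Nb Nb' /\ Free O Nb = Free O Nb'.
    move=> e1 e2 T1 T2 lt12 Ef.
    have [Q1 [E1 [A1 [A2 EA1]] _ SF1]] := memT e1 T1.
    have [Q2 [E2 [B1 [B2 EA2]] _ SF2]] := memT e2 T2.
    move: Ef; rewrite /f /sub E1 E2 /= => -[Esz Ety].
    have [d Ed] : exists d, e2 = e1 ++ d by case/andP: lt12 => /prefixP.
    have E12 : subt Q1 d = Some Q2 by rewrite -(subt_cat _ E1) -Ed.
    have S21 : {subset Free O Q2 <= Free O Q1}.
      move=> x Hx; have := Hx; rewrite !Free_mem => Hx'.
      case/orP: (subt_fv_lams E12 Hx') => // /lams_bv xb.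
      have xbN := subt_bv E1 xb.
      have xfN : x \in fv N by rewrite -(Free_mem O); exact: SF2.
      by have := bv_fv_sub UB EN xbN xfN; rewrite (negbTE (fvM x)).
    have [_ Eq] := uniq_min_size (Free_uniq O Q2) S21 (eq_leq Esz).
    have EF : Free O Q1 = Free O Q2.
      apply: (Free_eq HO) => x; by rewrite -!(Free_mem O) Eq.
    have EM1 : subt M (a ++ e1) = Some Q1 by rewrite (subt_cat _ EN).
    have EM2 : subt M (a ++ e2) = Some Q2 by rewrite (subt_cat _ EN).
    have [u Eu] := subt_ty TY EM1.
    exists (a ++ e1), (a ++ e2), Q1, Q2; split.
      case/andP: lt12 => pr ne; rewrite /addr_lt prefix_catr // eqxx pr /=.
      apply/negP => /eqP /(congr1 (drop (size a))); rewrite !drop_size_cat //.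
      by move=> E; rewrite E eqxx in ne.
    split; first exact: subt_addrs EM1.
    split; first exact: subt_addrs EM2.
    do 3 (split => //).
    split; first by rewrite EA1 EA2.
    by exists u; rewrite -Ety.
  move: NU => /(uniqPn (0, None)) [i [j [ltij ltj Eij]]].
  rewrite size_map in ltj; have lti := ltn_trans ltij ltj.
  rewrite !(nth_map [::]) // in Eij.
  set e1 := nth [::] T i in Eij; set e2 := nth [::] T j in Eij.
  have T1 : e1 \in T by exact: mem_nth.
  have T2 : e2 \in T by exact: mem_nth.
  have ne : e1 != e2 by rewrite /e1 /e2 nth_uniq // ltn_eqF.
  have [? [_ _ lt1 _]] := memT e1 T1.
  have [? [_ _ lt2 _]] := memT e2 T2.
  case/andP: lt1 => p1 _; case/andP: lt2 => p2 _.
  case/orP: (prefix_cmp p1 p2) => pr.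
    by apply: (key e1 e2) => //; rewrite /addr_lt pr ne.
  by apply: (key e2 e1) => //; rewrite /addr_lt pr eq_sym ne.
split => //.
case: P1 => b [b' [Nb [Nb' [lt [Hb [Hb' [Eb [Eb' [[Kd [psi [T1 T2]]] EF]]]]]]]]].
have [d Ed] : exists d, b' = b ++ d by case/andP: lt => /prefixP.
have dne : d != [::].
  by case/andP: lt => _; rewrite Ed; case: d {Ed} => //; rewrite cats0 eqxx.
have Ebd : subt Nb d = Some Nb' by rewrite -(subt_cat _ Eb) -Ed.
set M' := repl M b Nb'.
have Fv : fv Nb' =i fv Nb by move=> x; rewrite -!(Free_mem O) EF.
have FvM := repl_fv Eb Fv.
have LI' : LNF_inhabitant O Om M' phi.
  split.
    apply/andP; split.
      have [pre [post [B1 B2]]] := repl_bv Eb.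
      have [pre2 [post2 [C1 _]]] := repl_bv Ebd.
      rewrite /M' B2; move: UB; rewrite B1 C1; apply: subseq_uniq.
      apply: cat_subseq; first exact: subseq_refl.
      apply: cat_subseq; last exact: subseq_refl.
      apply: subseq_trans (suffix_subseq pre2 _); exact: prefix_subseq.
    by apply/allP => x; rewrite FvM (negbTE (fvM x)).
  split; first exact: repl_beta Eb (esym Kd) (subt_beta BN Eb') BN.
  split; first split.
  - apply: (repl_hrm HO Eb Fv) => //; exact: (subt_hrm HR Eb').
  - by rewrite (repl_ty Eb) ?T1 ?T2.
  - by rewrite -CL; apply: (Free_eq HO).
case=> _ /(_ M' LI'); rewrite leqNgt; apply/negP.
rewrite /M' negbK; apply: (repl_size Eb); exact: (subt_size dne Ebd).
Qed.
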